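(* Let $(X,\rho)$ be a metric space, $f:X\to X$ continuous, $x\in X$, $\ell\in\mathbb N$, $n\ge2$ an integer and $\varepsilon>0$. Then \[ \Lambda_\ell(x,n,\varepsilon)=\frac{n}{n-1}\Big[C_\ell(x,n,\varepsilon)-C_{\ell+1}(x,n,\varepsilon)\Big]+\delta^{N}_\ell,\qquad |\delta^N_\ell|\le\frac{2\ell}{n}. \] Consequently, if $\Lambda_\ell(x,n,\varepsilon)>0$, then, with $\delta^{\mathrm{RR}}_\ell$ satisfying $|\delta^{\mathrm{RR}}_\ell|\le 2\ell(\ell-1)/n$, \[ \mathrm{L}_\ell(x,n,\varepsilon)=\frac{\frac{n}{n-1}\big[\ell C_\ell-(\ell-1)C_{\ell+1}\big]-\frac1{n-1}+\delta^{\mathrm{RR}}_\ell}{\frac{n}{n-1}\big[C_\ell-C_{\ell+1}\big]+\delta^N_\ell}, \] where $C_\ell=C_\ell(x,n,\varepsilon)$ and $C_{\ell+1}=C_{\ell+1}(x,n,\varepsilon)$.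
   Context: Bowen metric $\rho_\ell(y,z)=\max_{0\le i<\ell}\rho(f^iy,f^iz)$; correlation sum $C_\ell(x,n,\varepsilon)=n^{-2}\#\{(i,j):0\le i,j<n,\ \rho_\ell(f^ix,f^jx)\le\varepsilon\}$. Recurrence plot $R(x,n,\varepsilon)$: $n\times n$ matrix ($0\le i,j<n$) with entry $1$ iff $\rho(f^ix,f^jx)\le\varepsilon$. A line of length $\ell$: triple $(i,j,\ell)$ with $0\le i,j\le n-\ell$, $i\ne j$, entries $(i+k,j+k)=1$ for $0\le k<\ell$, entry $(i-1,j-1)=0$ if $\min\{i,j\}>0$, entry $(i+\ell,j+\ell)=0$ if $\max\{i,j\}<n-\ell$. $N_l$ = number of lines of length exactly $l$ (boundary lines included), $\lambda_l=N_l/(n^2-n)$, $\Lambda_\ell=\sum_{l\ge\ell}\lambda_l$, $\mathrm{RR}_\ell=\sum_{l\ge\ell}l\lambda_l$, average line length $\mathrm{L}_\ell=\mathrm{RR}_\ell/\Lambda_\ell$. *)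

(* Defs.v *)
From HB Require Import structures.
From mathcomp Require Import all_boot all_order all_algebra.
From mathcomp Require Import reals.
Set Implicit Arguments. Unset Strict Implicit. Unset Printing Implicit Defensive.
Import Order.TTheory GRing.Theory Num.Theory.
Local Open Scope ring_scope.

Section RecDefs.
Variables (R : realType) (X : Type).

Definition is_metric (rho : X -> X -> R) : Prop :=
  [/\ forall y z, 0 <= rho y z,
      forall y z, rho y z = 0 <-> y = z,
      forall y z, rho y z = rho z y &
      forall y z w, rho y w <= rho y z + rho z w].

Definition metric_continuous (rho : X -> X -> R) (f : X -> X) : Prop :=
  forall y (e : R), 0 < e -> exists2 d : R, 0 < d &
    forall z, rho y z < d -> rho (f y) (f z) < e.

Variables (rho : X -> X -> R) (f : X -> X).

Definition bowen (l : nat) (y z : X) : R :=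
  \big[Num.max/0]_(i < l) rho (iter i f y) (iter i f z).

Definition corr_sum (x : X) (n : nat) (eps : R) (l : nat) : R :=
  (#|[pred p : 'I_n * 'I_n |
       bowen l (iter p.1 f x) (iter p.2 f x) <= eps]|)%:R / (n ^ 2)%:R.

Definition rp (x : X) (eps : R) (i j : nat) : bool :=
  rho (iter i f x) (iter j f x) <= eps.

Definition is_line (x : X) (n : nat) (eps : R) (i j l : nat) : bool :=
  [&& (i <= n - l)%N, (j <= n - l)%N, i != j,
      [forall k : 'I_l, rp x eps (i + k) (j + k)],
      (0 < minn i j)%N ==> ~~ rp x eps i.-1 j.-1 &
      (maxn i j < n - l)%N ==> ~~ rp x eps (i + l) (j + l)].

Definition Nlines (x : X) (n : nat) (eps : R) (l : nat) : nat :=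
  #|[pred p : 'I_n * 'I_n | is_line x n eps p.1 p.2 l]|.

Definition lam (x : X) (n : nat) (eps : R) (l : nat) : R :=
  (Nlines x n eps l)%:R / (n ^ 2 - n)%:R.

(* Lambda_l = sum_{l' >= l} lambda_l'  (lines have length <= n) *)
Definition Lam (x : X) (n : nat) (eps : R) (l : nat) : R :=
  \sum_(l <= l' < n.+1) lam x n eps l'.

Definition RRl (x : X) (n : nat) (eps : R) (l : nat) : R :=
  \sum_(l <= l' < n.+1) l'%:R * lam x n eps l'.

Definition Lavg (x : X) (n : nat) (eps : R) (l : nat) : R :=
  RRl x n eps l / Lam x n eps l.

End RecDefs.

(* Main.v *)
Require Import Defs.
From HB Require Import structures.
From mathcomp Require Import all_boot all_order all_algebra.
From mathcomp Require Import reals.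
From mathcomp Require Import zify ring lra.
Import Order.TTheory GRing.Theory Num.Theory.
Set Implicit Arguments. Unset Strict Implicit. Unset Printing Implicit Defensive.

Section Aux.
Variables (R : realType) (X : Type) (rho : X -> X -> R) (f : X -> X) (x : X)
  (eps : R) (n : nat).
Hypothesis rho0 : forall y, rho y y = 0%R.
Hypothesis eps0 : (0 <= eps)%R.

Definition r i j := rp rho f x eps i j.
Definition A m i j := [forall k : 'I_m, r (i + k) (j + k)].
Definition seg m i j := [&& (i <= n - m), (j <= n - m), i != j & A m i j].
Definition lm i j := (0 < minn i j) ==> ~~ r i.-1 j.-1.
Definition lseg m i j := seg m i j && lm i j.
Definition cnt (F : nat -> nat -> nat) := \sum_(i < n) \sum_(j < n) F i j.

Lemma AS m i j : A m.+1 i j = A m i j && r (i + m) (j + m).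
Proof.
apply/forallP/andP => [H|[/forallP H1 H2] k].
  split; last by have := H ord_max.
  by apply/forallP => k; have := H (widen_ord (leqnSn _) k).
have [km|] := ltnP k m; first by have := H1 (Ordinal km).
by have := ltn_ord k; rewrite ltnS => a b; have -> : (k:nat) = m by lia.
Qed.

Lemma is_lineE m i j : is_line rho f x n eps i j m = lseg m i j && ~~ lseg m.+1 i j.
Proof.
rewrite /is_line /lseg /seg AS /lm -/(A m i j).
case Hi: (i <= n - m); case Hj: (j <= n - m); case Hij: (i != j);
 case: (A m i j); rewrite /r; case: (rp rho f x eps (i+m) (j+m));
 case: ((0 < minn i j) ==> ~~ r i.-1 j.-1) => //=;
 case Hi': (i <= n - m.+1); case Hj': (j <= n - m.+1); case Hmx: (maxn i j < n - m) => //=; lia.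
Qed.

Lemma lsegS m i j : lseg m.+1 i j -> lseg m i j.
Proof.
rewrite /lseg /seg AS => /andP[/and4P[Hi Hj Hij /andP[HA _]] Hl].
rewrite Hij HA Hl /=; apply/andP; split; lia.
Qed.

Lemma segS m i j : seg m.+1 i j -> seg m i j.
Proof.
rewrite /seg AS => /and4P[Hi Hj Hij /andP[HA _]].
rewrite Hij HA /=; apply/andP; split; lia.
Qed.

Lemma seg_big m i j : (n <= m)%N -> seg m i j = false.
Proof. move=> H; rewrite /seg; apply/negP => /and4P[Hi Hj /eqP Hij _]; lia. Qed.

Lemma bowenE m i j :
  (bowen rho f m (iter i f x) (iter j f x) <= eps)%R = A m i j.
Proof.
apply/bigmax_leP/forallP => [[_ H] k|H]; last split => // k _.
  by have := H k isT; rewrite /r /rp addnC (addnC j) !iterD.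
by have := H k; rewrite /r /rp addnC (addnC j) !iterD.
Qed.


Lemma AS' m i j : A m.+1 i j = r i j && A m i.+1 j.+1.
Proof.
apply/forallP/andP => [H|[H1 /forallP H2] k].
  split; first by have := H ord0; rewrite !addn0.
  by apply/forallP => k; have := H (lift ord0 k); rewrite ?lift0 ?bump0' !addnS.
case: k => [[|k] Hk]; first by rewrite !addn0.
by have := H2 (Ordinal (Hk : k < m)); rewrite /= !addnS.
Qed.

Lemma bump0' i : bump 0 i = i.+1. Proof. by rewrite /bump add1n. Qed.

Lemma cntD F G : cnt (fun i j => F i j + G i j) = cnt F + cnt G.
Proof. by rewrite /cnt -big_split; apply: eq_bigr => i _; rewrite big_split. Qed.

Lemma cnt_le F G : (forall i j, F i j <= G i j) -> cnt F <= cnt G.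
Proof. by move=> H; apply: leq_sum => i _; apply: leq_sum => j _. Qed.

Lemma card_cnt (P : nat -> nat -> bool) :
  #|[pred p : 'I_n * 'I_n | P p.1 p.2]| = cnt (fun i j => P i j).
Proof.
rewrite /cnt pair_big /= -sum1_card big_mkcond /=.
by apply: eq_bigr => p _; rewrite inE; case: (P _ _).
Qed.

Definition T m := cnt (fun i j => lseg m i j).
Definition S m := cnt (fun i j => seg m i j).
Definition N m := Nlines rho f x n eps m.

Lemma TS m : T m = N m + T m.+1.
Proof.
rewrite /N /Nlines (card_cnt (fun a b => is_line rho f x n eps a b m)) /T -cntD; apply: eq_bigr => i _; apply: eq_bigr => j _.
rewrite is_lineE; have := @lsegS m i j.
by case: (lseg m.+1 i j); case: (lseg m i j) => // /(_ isT).
Qed.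

Lemma T_big m : n <= m -> T m = 0.
Proof. by move=> H; rewrite /T /cnt big1 // => i _; rewrite big1 // => j _; rewrite /lseg seg_big. Qed.

Lemma S_big m : n <= m -> S m = 0.
Proof. by move=> H; rewrite /S /cnt big1 // => i _; rewrite big1 // => j _; rewrite seg_big. Qed.

Lemma ST m : 0 < m -> S m = T m + S m.+1.
Proof.
move=> Hm.
have -> : S m = T m + cnt (fun i j => seg m i j && ~~ lm i j).
  rewrite -cntD; apply: eq_bigr => i _; apply: eq_bigr => j _.
  by rewrite /lseg; case: (seg m i j); case: (lm i j).
congr (_ + _); rewrite /S /cnt.
case En: n => [|n']; first by rewrite !big_ord0.
rewrite big_ord_recl big1 ?add0n; last by move=> j _; rewrite /lm min0n /= andbF.
rewrite big_ord_recr /= [X in _ = _ + X]big1 ?addn0; last first.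
  move=> j _; apply/eqP; rewrite eqb0; apply/negP => /and4P[H1 H2 /eqP H3 _]; lia.
apply: eq_bigr => i _; rewrite ?lift0 ?bump0'.
rewrite big_ord_recl [lm i.+1 ord0](_ : _ = true) ?andbF ?add0n; last by rewrite /lm minn0.
rewrite big_ord_recr /= [X in _ = _ + X](_ : _ = 0) ?addn0; last first.
  apply/eqP; rewrite eqb0; apply/negP => /and4P[H1 H2 /eqP H3 _]; lia.
apply: eq_bigr => j _; rewrite ?lift0 ?bump0' /seg /lm AS' /= minnSS /=.
case: (A m i.+1 j.+1); case: (r i j); rewrite ?andbF ?andbT //=.
case H1: (i < n - m); case H2: (j < n - m); case H3: (i.+1 != j.+1);
  case H4: (i <= n - m.+1); case H5: (j <= n - m.+1); case H6: (i != j) => //=; lia.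
Qed.


Definition card m := cnt (fun i j => A m i j).
Definition E m := cnt (fun i j => [&& i != j, ~~ ((i <= n - m) && (j <= n - m)) & A m i j]).

Lemma Adiag m i : A m i i.
Proof. by apply/forallP => k; rewrite /r /rp rho0. Qed.

Lemma eq_sum i : i < n -> \sum_(j < n) (i == j :> nat) = 1.
Proof.
move=> Hi; rewrite (bigD1 (Ordinal Hi)) //= eqxx big1 // => j Hj.
by apply/eqP; rewrite eqb0; apply: contra Hj => /eqP Hij; apply/eqP/val_inj.
Qed.

Lemma neq_sum i : i < n -> \sum_(j < n) (i != j :> nat) = n - 1.
Proof.
move=> Hi; have := eq_sum Hi.
have : \sum_(j < n) ((i != j :> nat) + (i == j :> nat)) = n.
  by rewrite (eq_bigr (fun _ => 1)) ?sum1_card ?card_ord // => j _; case: (i == j).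
rewrite big_split /=; lia.
Qed.

Lemma cardE m : card m = n + S m + E m.
Proof.
have -> : n = cnt (fun i j => i == j).
  rewrite /cnt (eq_bigr (fun _ => 1)) ?sum1_card ?card_ord // => i _.
  exact: eq_sum.
rewrite /S /E -!cntD /card; apply: eq_bigr => i _; apply: eq_bigr => j _.
case: eqP => [->|Hij]; first by rewrite Adiag /seg eqxx /= !andbF.
move/eqP/negbTE: Hij => Hij.
rewrite /seg Hij; case: (A m i j); case: (i <= n - m); case: (j <= n - m) => //=.
Qed.

Lemma hi_sum m : 0 < m -> \sum_(i < n) (n - m < i) <= m - 1.
Proof.
move=> Hm; rewrite -(big_mkord xpredT (fun i => (n - m < i):nat)).
set k := minn n (n - m).+1.
rewrite (@big_cat_nat _ _ _ k) ?leq0n ?geq_minl //=.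
rewrite big_nat_cond big1 ?add0n; last first.
  by move=> i /andP[/andP[_ Hi] _]; apply/eqP; rewrite eqb0 -leqNgt; rewrite /k in Hi; lia.
apply: (@leq_trans (\sum_(k <= i < n) 1)); first by apply: leq_sum => i _; case: (_ < _).
rewrite sum_nat_const_nat /k; lia.
Qed.

Lemma Ebound m : 0 < m -> E m <= 2 * (m - 1) * (n - 1).
Proof.
move=> Hm.
apply: (@leq_trans (cnt (fun i j => (n - m < i) * (i != j) + (n - m < j) * (j != i)))).
  apply: cnt_le => i j; case: (A m i j); rewrite ?andbF //.
  case H1: (i <= n - m); case H2: (j <= n - m); case H3: (i != j); rewrite ?(eq_sym j i) ?H3 //=; lia.
rewrite cntD.
have Hs : cnt (fun i j => (n - m < i) * (i != j)) <= (m - 1) * (n - 1).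
  rewrite /cnt (eq_bigr (fun i : 'I_n => (n - m < i) * (n - 1))); last first.
    by move=> i _; rewrite -big_distrr /= neq_sum.
  by rewrite -big_distrl /= leq_mul2r hi_sum ?orbT.
have Hs2 : cnt (fun i j => (n - m < j) * (j != i)) = cnt (fun i j => (n - m < i) * (i != j)).
  by rewrite /cnt exchange_big.
rewrite Hs2; lia.
Qed.


Lemma TN l k : T l = \sum_(l <= L < l + k) N L + T (l + k).
Proof.
elim: k => [|k IH]; first by rewrite addn0 big_geq // .
by rewrite IH addnS big_nat_recr ?leq_addr //= -addnA -TS.
Qed.

Lemma SN l k : 0 < l -> S l = \sum_(l <= L < l + k) T L + S (l + k).
Proof.
move=> Hl; elim: k => [|k IH]; first by rewrite addn0 big_geq // .
rewrite IH addnS big_nat_recr ?leq_addr //= -addnA -ST //; lia.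
Qed.

Lemma RRN l k : l * T l + \sum_(l.+1 <= L < (l + k).+1) T L
  = \sum_(l <= L < l + k) L * N L + (l + k) * T (l + k).
Proof.
elim: k => [|k IH]; first by rewrite addn0 !big_geq // addn0 add0n.
rewrite addnS big_nat_recr //= ?ltnS ?leq_addr // addnA IH.
rewrite big_nat_recr ?leq_addr //= (TS (l + k)) !mulnDr; lia.
Qed.

Lemma F1 l : \sum_(l <= L < n.+1) N L = T l.
Proof.
have [Hl|Hl] := leqP l n.+1.
  by rewrite (TN l (n.+1 - l)) subnKC // (T_big (leqnSn n)) addn0.
by rewrite big_geq ?T_big //; lia.
Qed.

Lemma F2 l : 0 < l -> \sum_(l <= L < n.+1) L * N L = l * T l + S l.+1.
Proof.
move=> Hl0; have [Hl|Hl] := leqP l n.+1.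
  have := RRN l (n.+1 - l); rewrite subnKC // (T_big (leqnSn n)) muln0 addn0 => <-.
  rewrite (SN (n.+1 - l) (ltn0Sn l)).
  have -> : l.+1 + (n.+1 - l) = n.+2 by lia.
  by rewrite (S_big (leqW (leqnSn n))) addn0.
by rewrite big_geq ?T_big ?S_big //; lia.
Qed.

Lemma cardC m : #|[pred p : 'I_n * 'I_n |
   (bowen rho f m (iter p.1 f x) (iter p.2 f x) <= eps)%R]| = card m.
Proof.
rewrite (card_cnt (fun a b => (bowen rho f m (iter a f x) (iter b f x) <= eps)%R)).
by apply: eq_bigr => i _; apply: eq_bigr => j _; rewrite bowenE.
Qed.

End Aux.

Unset Implicit Arguments.
Local Open Scope ring_scope.
Theorem mainTheorem8 (R : realType) (X : Type) (rho : X -> X -> R)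
  (f : X -> X) (x : X) (l n : nat) (eps : R) :
  is_metric rho -> metric_continuous rho f ->
  (1 <= l)%N -> (2 <= n)%N -> 0 < eps ->
  let Cl := corr_sum rho f x n eps l in
  let Cl1 := corr_sum rho f x n eps l.+1 in
  exists dN : R,
    Lam rho f x n eps l = n%:R / (n%:R - 1) * (Cl - Cl1) + dN /\
    `|dN| <= 2 * l%:R / n%:R /\
    (0 < Lam rho f x n eps l ->
      exists dRR : R,
        `|dRR| <= 2 * l%:R * (l%:R - 1) / n%:R /\
        Lavg rho f x n eps l =
          (n%:R / (n%:R - 1) * (l%:R * Cl - (l%:R - 1) * Cl1)
             - 1 / (n%:R - 1) + dRR)
          / (n%:R / (n%:R - 1) * (Cl - Cl1) + dN)).
Proof.
move=> [_ Hrho0 _ _] _ Hl Hn Heps Cl Cl1.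
have rho0 : forall y, rho y y = 0 by move=> y; apply/Hrho0.
have eps0 : 0 <= eps by apply: ltW.
have hF1 := F1 rho f x n eps0 l.
have hF2 := F2 rho f x n eps0 Hl.
have hST := ST rho f x n eps0 Hl.
have hC0 := cardE f x n rho0 eps0 l.
have hC1 := cardE f x n rho0 eps0 l.+1.
have hE0 := Ebound rho f x n eps0 Hl.
have hE1 := Ebound rho f x n eps0 (ltn0Sn l).
have HLam : Lam rho f x n eps l = (T rho f x eps n l)%:R / (n ^ 2 - n)%:R.
  by rewrite /Lam /lam -mulr_suml -natr_sum hF1.
have HRR : RRl rho f x n eps l = (l * T rho f x eps n l + S rho f x eps n l.+1)%:R / (n ^ 2 - n)%:R.
  rewrite /RRl /lam; under eq_bigr => i _ do rewrite mulrA -natrM.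
  by rewrite -mulr_suml -natr_sum hF2.
have HC0 : Cl = (card rho f x eps n l)%:R / (n ^ 2)%:R by rewrite /Cl /corr_sum (cardC _ _ _ n eps0).
have HC1 : Cl1 = (card rho f x eps n l.+1)%:R / (n ^ 2)%:R by rewrite /Cl1 /corr_sum (cardC _ _ _ n eps0).
have hA : ((l - 1) * E rho f x eps n l.+1 <= 2 * l * (l - 1) * (n - 1))%N.
  by move: hE1; rewrite subSS subn0 => h; nia.
have hB : (l * E rho f x eps n l <= 2 * l * (l - 1) * (n - 1))%N.
  by move: hE0 => h; nia.
move: hE0 hE1 hA hB; rewrite -!(ler_nat R) !natrM !natrB ?subSS ?subn0 // ; try lia.
rewrite /Lavg HLam HRR HC0 HC1 hC0 hC1 hST !natrD !natrM natrB; last by nia.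
rewrite !natrX.
have := ler0n R (E rho f x eps n l); have := ler0n R (E rho f x eps n l.+1).
have Hl1 : 1 <= l%:R :> R by rewrite ler1n.
have Hn2 : 2 <= n%:R :> R by rewrite ler_nat.
move: (T rho f x eps n l)%:R (S rho f x eps n l.+1)%:R
  (E rho f x eps n l)%:R (E rho f x eps n l.+1)%:R => t s1 e0 e1.
move=> pe1 pe0 h0 h1 hA hB.
move: h1; rewrite -addn1 natrD => h1.
have Hn0 : n%:R != 0 :> R by apply/eqP => h; lra.
have Hn1 : n%:R - 1 != 0 :> R by apply/eqP => h; lra.
set D := n%:R ^+ 2 - n%:R.
have HDe : D = n%:R * (n%:R - 1) by rewrite /D; ring.
have HDp : 0 < D by rewrite HDe; apply: mulr_gt0; lra.
have H1 : t / D = n%:R / (n%:R - 1) *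
   ((n%:R + (t + s1) + e0) / (n%:R * n%:R) - (n%:R + s1 + e1) / (n%:R * n%:R)) +
   (e1 - e0) / D.
  by rewrite HDe; field; rewrite Hn0 Hn1.
exists ((e1 - e0) / D); split; first exact: H1.
split.
  rewrite normrM normfV (gtr0_norm HDp) ler_pdivrMr //.
  have -> : 2 * l%:R / n%:R * D = 2 * l%:R * (n%:R - 1) by rewrite HDe; field.
  rewrite ler_norml; apply/andP; split; nra.
move=> Ht.
have Ht0 : t != 0 by apply/eqP => h; move: Ht; rewrite h mul0r ltxx.
exists (((l%:R - 1) * e1 - l%:R * e0) / D); split.
  rewrite normrM normfV (gtr0_norm HDp) ler_pdivrMr //.
  have -> : 2 * l%:R * (l%:R - 1) / n%:R * D = 2 * l%:R * (l%:R - 1) * (n%:R - 1)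
    by rewrite HDe; field.
  rewrite ler_norml; apply/andP; split; nra.
rewrite -H1 HDe; field.
by rewrite Hn0 Hn1 Ht0.
Qed.
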